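(* Let $\mathcal{P}$ be a finite poset with $p$ elements such that $\mathcal{C}(\mathcal{P})$ is simplicial. Then $\mathbf{M}_{\mathcal{P}}^{-1}$ maps $\mathcal{C}(\mathcal{P})$ bijectively onto $\mathbb{R}^p_+$.
   Context: The order cone $\mathcal{C}(\mathcal{P})\subset\mathbb{R}^{\mathcal{P}}$ is the set of functions $\mathbf{f}$ on $\mathcal{P}$ with $f_x\ge0$ for all $x$ and $f_x\le f_y$ whenever $x\preceq y$. A cone in $\mathbb{R}^p$ is simplicial if it is the conical hull of $p$ linearly independent vectors. With standard basis $\{\mathbf{e}_x\}$ of $\mathbb{R}^{\mathcal{P}}\cong\mathbb{R}^p$, the Möbius transform $\mathbf{M}_{\mathcal{P}}$ is the linear map with $\mathbf{M}_{\mathcal{P}}(\mathbf{e}_x)=\sum_{y:\,x\preceq y}\mathbf{e}_y$; $\mathbb{R}^p_+$ denotes the vectors with nonnegative entries. *)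

(* Defs.v *)
From HB Require Import structures.
From mathcomp Require Import all_boot all_order all_algebra.
Set Implicit Arguments. Unset Strict Implicit. Unset Printing Implicit Defensive.
Import Order.TTheory GRing.Theory Num.Theory.
Local Open Scope ring_scope.

(* A function f on the finite poset T is encoded as a row vector
   v : 'rV[R]_#|T|, with f_x = v 0 (enum_rank x), i.e. the coordinate of
   index i : 'I_#|T| corresponds to the element enum_val i of T. The
   standard basis vector e_x is the row vector delta_mx 0 (enum_rank x). *)

Definition order_cone (d : Order.disp_t) (T : finPOrderType d) (R : realFieldType)
  (v : 'rV[R]_#|T|) : Prop :=
  (forall i : 'I_#|T|, 0 <= v 0 i) /\
  (forall i j : 'I_#|T|, (enum_val i <= enum_val j)%O -> v 0 i <= v 0 j).

Definition simplicial (p : nat) (R : realFieldType) (C : 'rV[R]_p -> Prop) : Prop :=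
  exists B : 'M[R]_p, row_free B /\
    forall v, C v <-> exists c : 'rV[R]_p, (forall i, 0 <= c 0 i) /\ v = c *m B.

(* Moebius transform as a matrix acting on row vectors v |-> v *m M:
   e_x *m M = row x of M = sum_{y : x <= y} e_y. *)
Definition moebius (d : Order.disp_t) (T : finPOrderType d) (R : realFieldType)
  : 'M[R]_#|T| :=
  \matrix_(i, j) ((enum_val i <= enum_val j)%O)%:R.

Definition nonneg_orthant (p : nat) (R : realFieldType) (w : 'rV[R]_p) : Prop :=
  forall i, 0 <= w 0 i.

(* Main.v *)
Require Import Defs.
From HB Require Import structures.
From mathcomp Require Import all_boot all_order all_algebra.
Import Order.TTheory GRing.Theory Num.Theory.
Local Open Scope ring_scope.

Lemma moeb_unit (d : Order.disp_t) (T : finPOrderType d) (R : realFieldType) :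
  moebius T R \in unitmx.
Proof.
rewrite -row_free_unit; apply: inj_row_free => u Hu.
have step : forall j : 'I_#|T|, (forall i : 'I_#|T|, (enum_val i < enum_val j)%O -> u 0 i = 0) -> u 0 j = 0.
  move=> j IH; move/matrixP: (Hu) => /(_ 0 j); rewrite !mxE /=.
  rewrite (bigD1 j) //= mxE lexx mulr1 big1 ?addr0 // => i nij.
  rewrite mxE; case lij: (enum_val i <= enum_val j)%O; last by rewrite mulr0.
  rewrite IH ?mul0r //; rewrite lt_neqAle lij andbT.
  by apply: contra nij => /eqP/enum_val_inj ->.
suff H : forall n (j : 'I_#|T|), (#|[set i : 'I_#|T| | (enum_val i < enum_val j)%O]| <= n)%N -> u 0 j = 0.
  by apply/rowP => j; rewrite mxE; exact: (H _ j (leqnn _)).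
elim=> [|n IHn] j Hj; apply: step => i lij.
  have : i \in [set i : 'I_#|T| | (enum_val i < enum_val j)%O] by rewrite inE.
  by move: Hj; rewrite leqn0 => /eqP/cards0_eq ->; rewrite inE.
apply: IHn; rewrite -ltnS; apply: leq_trans Hj; apply: proper_card.
apply/properP; split.
  by apply/subsetP => k; rewrite !inE => /lt_trans; apply.
by exists i; rewrite !inE ?ltxx.
Qed.

Section S.
Variables (d : Order.disp_t) (T : finPOrderType d) (R : realFieldType).
Local Notation M := (moebius T R).

Lemma Mrow_cone (i : 'I_#|T|) : order_cone (row i M).
Proof.
split=> [j|j k ljk]; rewrite !mxE; first exact: ler0n.
case lij: (enum_val i <= enum_val j)%O; last exact: ler0n.
by rewrite (le_trans lij ljk).
Qed.

Lemma extreme (i : 'I_#|T|) (f : 'rV[R]_#|T|) :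
  order_cone f -> order_cone (row i M - f) -> f = f 0 i *: row i M.
Proof.
move=> [f0 fm] [g0 gm]; apply/rowP => j; rewrite !mxE.
case lij: (enum_val i <= enum_val j)%O.
  rewrite /= mulr1n mulr1; apply/eqP; rewrite eq_le (fm _ _ lij) andbT.
  have := gm _ _ lij; rewrite !mxE lexx lij /= mulr1n.
  by rewrite lerD2l lerN2.
rewrite /= mulr0n mulr0; apply/eqP; rewrite eq_le f0 andbT.
by have := g0 j; rewrite !mxE lij /= mulr0n sub0r oppr_ge0.
Qed.

Lemma cone_sum (w : 'rV[R]_#|T|) : nonneg_orthant w -> order_cone (w *m M).
Proof.
move=> hw; split=> [j|j k ljk]; rewrite !mxE.
  by apply: sumr_ge0 => i _; rewrite mxE mulr_ge0 ?ler0n.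
apply: ler_sum => i _; rewrite !mxE; apply: ler_wpM2l => //.
case lij: (enum_val i <= enum_val j)%O; last exact: ler0n.
by rewrite (le_trans lij ljk).
Qed.

End S.

Theorem lemma4 (d : Order.disp_t) (T : finPOrderType d) (R : realFieldType) :
  simplicial (order_cone (T := T) (R := R)) ->
  let M := moebius T R in
  M \in unitmx /\
  (forall v : 'rV[R]_#|T|, order_cone v -> nonneg_orthant (v *m invmx M)) /\
  (forall v1 v2 : 'rV[R]_#|T|, order_cone v1 -> order_cone v2 ->
      v1 *m invmx M = v2 *m invmx M -> v1 = v2) /\
  (forall w : 'rV[R]_#|T|, nonneg_orthant w ->
      exists2 v, order_cone v & v *m invmx M = w).
Proof.
move=> [B [_ HB]] M.
have Mu : M \in unitmx by exact: moeb_unit.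
have cone_of : forall c : 'rV[R]_#|T|, (forall i, 0 <= c 0 i) -> order_cone (c *m B).
  by move=> c hc; apply/(HB _).2; exists c.
have rowC : forall k, order_cone (row k B).
  move=> k; rewrite rowE; apply: cone_of => j; rewrite mxE; exact: ler0n.
have key : forall i, exists k, row k B = B k i *: row i M /\ 0 < B k i.
  move=> i; have [c [hc Ec]] := (HB _).1 (@Mrow_cone _ _ R i).
  have ext : forall k, c 0 k *: row k B = (c 0 k * B k i) *: row i M.
    move=> k; rewrite [LHS](@extreme _ _ _ i).
    - by rewrite !mxE.
    - rewrite rowE scalemxAl; apply: cone_of => j; rewrite !mxE mulr_ge0 //; exact: ler0n.
    - rewrite Ec rowE scalemxAl -mulmxBl; apply: cone_of => j.
      rewrite !mxE; case: (eqVneq j k) => [->|njk].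
        by rewrite eqxx /= mulr1n mulr1 subrr.
      by rewrite andbF /= mulr0n mulr0 subr0.
  case: (pickP (fun k => c 0 k * B k i != 0)) => [k nz|none]; last first.
    move/rowP: Ec => /(_ i); rewrite mulmx_sum_row !mxE lexx summxE big1.
      by move/eqP; rewrite oner_eq0.
    by move=> k _; rewrite !mxE; have := none k => /negbFE/eqP.
  have ck : c 0 k != 0 by apply: contraNneq nz => ->; rewrite mul0r.
  exists k; split.
    by apply: (scalerI ck); rewrite ext scalerA.
  rewrite lt_def; have := (rowC k).1 i; rewrite mxE => ->; rewrite andbT.
  by apply: contraNneq nz => ->; rewrite mulr0.
pose sig i := odflt i [pick k | (row k B == B k i *: row i M) && (0 < B k i)].
have sigP : forall i, row (sig i) B = B (sig i) i *: row i M /\ 0 < B (sig i) i.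
  move=> i; rewrite /sig; case: pickP => [k /andP[/eqP -> ->]//|none].
  have [k [E1 E2]] := key i; have := none k; by rewrite E1 eqxx E2.
have sig_inj : injective sig.
  have half : forall i j, sig i = sig j -> (enum_val j <= enum_val i)%O.
    move=> i j eij; have [E1 P1] := sigP i; have [E2 _] := sigP j.
    move: E1; rewrite eij E2 => /rowP /(_ i); rewrite !mxE lexx /= mulr1n mulr1.
    case: (enum_val j <= enum_val i)%O => //=; rewrite mulr0n mulr0 => E.
    by move: P1; rewrite eij -E ltxx.
  by move=> i j eij; apply: enum_val_inj; apply: le_anti; rewrite !half.
split=> //; split.
  move=> v /(HB v).1 [c [hc ->]].
  pose w := \row_j (c 0 (sig j) * B (sig j) j).
  have -> : c *m B = w *m M.
    rewrite !mulmx_sum_row (reindex_inj sig_inj); apply: eq_bigr => j _.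
    by rewrite mxE (sigP j).1 scalerA.
  rewrite mulmxK // => j; rewrite mxE mulr_ge0 //; exact: ltW (sigP j).2.
split.
  by move=> v1 v2 _ _ E; rewrite -(mulmxKV Mu v1) E mulmxKV.
move=> w hw; exists (w *m M); first exact: cone_sum.
by rewrite mulmxK.
Qed.
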